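(* Let $S$ be a semiring and let $\mathcal{A}=(A,X,Y,\sigma^A,\delta^A,\omega^A)$ be a Mealy-type weighted automaton over $S$. Then there exists a Moore-type weighted automaton $\mathcal{B}=(B,X,Y,\sigma^B,\delta^B,\omega^B)$ over $S$ such that $[\![\mathcal{A}]\!]_{1n}=[\![\mathcal{B}]\!]_{1n}$ and $[\![\mathcal{A}]\!]_{n1}=[\![\mathcal{B}]\!]_{n1}$. Moreover, $\mathcal{B}$ can be chosen with $|B|\le |A|\cdot(|X|+1)$.
   Context: A semiring $(S,+,\cdot,0,1)$ is a set with $(S,+,0)$ a commutative monoid, $(S,\cdot,1)$ a monoid (not necessarily commutative), $\cdot$ distributing over $+$ on both sides, and $0\cdot s=s\cdot 0=0$. $(X\times Y)^*$ is identified with the set of pairs $(u,v)\in X^*\times Y^*$ with $|u|=|v|$; its empty element is $(\varepsilon,\varepsilon)$. All automata have finite nonempty state set and finite nonempty alphabets $X,Y$. For a map $\delta:Q\times X\times Q\to S$ write $\delta_x(p,q)=\delta(p,x,q)$ (a $Q\times Q$ matrix over $S$), and for a word $w=z_1\cdots z_m\in X^+$ let $\delta_w=\delta_{z_1}\cdot\delta_{z_2}\cdots\delta_{z_m}$ (matrix product, $(\mu_1\cdot\mu_2)(p,q)=\sum_{r\in Q}\mu_1(p,r)\cdot\mu_2(r,q)$). A Mealy-type weighted automaton over $S$ is $\mathcal{A}=(A,X,Y,\sigma,\delta,\omega)$ with $\sigma:A\to S$, $\delta:A\times X\times A\to S$, $\omega:A\times X\times Y\to S$; write $\omega_{x,y}(a)=\omega(a,x,y)$.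 For both behaviors below, the value at $(\varepsilon,\varepsilon)$ is $\sum_{a\in A}\sigma(a)$. For $u=x_1\cdots x_n$, $v=y_1\cdots y_n$ with $n\ge 1$: $[\![\mathcal{A}]\!]_{1n}(u,v)=\sum_{(a_0,\dots,a_{n-1})\in A^{n}}\sigma(a_0)\cdot\omega_{x_1,y_1}(a_0)\cdot\delta_{x_1}(a_0,a_1)\cdot\omega_{x_2,y_2}(a_1)\cdot\delta_{x_2}(a_1,a_2)\cdots\omega_{x_{n-1},y_{n-1}}(a_{n-2})\cdot\delta_{x_{n-1}}(a_{n-2},a_{n-1})\cdot\omega_{x_n,y_n}(a_{n-1})$; $[\![\mathcal{A}]\!]_{n1}(u,v)=\sum_{(a_0,\dots,a_{n-1})\in A^{n}}\sigma(a_0)\cdot\omega_{x_1,y_1}(a_0)\cdot\delta_{x_1}(a_0,a_1)\cdot\omega_{x_2,y_2}(a_1)\cdot\delta_{x_1x_2}(a_0,a_2)\cdot\omega_{x_3,y_3}(a_2)\cdots\delta_{x_1\cdots x_{n-1}}(a_0,a_{n-1})\cdot\omega_{x_n,y_n}(a_{n-1})$. A Moore-type weighted automaton over $S$ is $\mathcal{B}=(B,X,Y,\sigma,\delta,\omega)$ with $\sigma:B\to S$, $\delta:B\times X\times B\to S$, $\omega:B\times Y\to S$; write $\omega_y(b)=\omega(b,y)$. Both behaviors have value $\sum_{b\in B}\sigma(b)$ at $(\varepsilon,\varepsilon)$, and for $u=x_1\cdots x_n$, $v=y_1\cdots y_n$, $n\ge1$: $[\![\mathcal{B}]\!]_{1n}(u,v)=\sum_{(b_0,\dots,b_n)\in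 B^{n+1}}\sigma(b_0)\cdot\delta_{x_1}(b_0,b_1)\cdot\omega_{y_1}(b_1)\cdot\delta_{x_2}(b_1,b_2)\cdot\omega_{y_2}(b_2)\cdots\delta_{x_n}(b_{n-1},b_n)\cdot\omega_{y_n}(b_n)$; $[\![\mathcal{B}]\!]_{n1}(u,v)=\sum_{(b_0,\dots,b_n)\in B^{n+1}}\sigma(b_0)\cdot\delta_{x_1}(b_0,b_1)\cdot\omega_{y_1}(b_1)\cdot\delta_{x_1x_2}(b_0,b_2)\cdot\omega_{y_2}(b_2)\cdots\delta_{x_1\cdots x_n}(b_0,b_n)\cdot\omega_{y_n}(b_n)$. *)

(* Defs.v *)
From HB Require Import structures.
From mathcomp Require Import all_boot all_order all_algebra.
Set Implicit Arguments. Unset Strict Implicit. Unset Printing Implicit Defensive.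
Import GRing.Theory.
Local Open Scope ring_scope.

(* Words over X x Y (= pairs (u,v) with |u| = |v|) are sequences of pairs. *)

Section WA.
Variables (S : pzSemiRingType) (X Y : finType).

Fixpoint deltaw (Q : finType) (delta : Q -> X -> Q -> S) (w : seq X) : Q -> Q -> S :=
  match w with
  | [::] => fun p q => (p == q)%:R
  | x :: w' => fun p q => \sum_(r : Q) delta p x r * deltaw delta w' r q
  end.

Definition mealy_1n (A : finType) (sigma : A -> S) (delta : A -> X -> A -> S)
  (omega : A -> X -> Y -> S) (w : seq (X * Y)) : S :=
  match w with
  | [::] => \sum_(a : A) sigma a
  | p :: w' =>
    let n := (size w').+1 in
    let t : n.-tuple (X * Y) := in_tuple (p :: w') in
    \sum_(a : {ffun 'I_n -> A})
      (sigma (a ord0) *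
       \prod_(i < n)
         (omega (a i) (tnth t i).1 (tnth t i).2 *
          (if (i.+1 < n)%N then delta (a i) (tnth t i).1 (a (inord i.+1)) else 1)))
  end.

Definition mealy_n1 (A : finType) (sigma : A -> S) (delta : A -> X -> A -> S)
  (omega : A -> X -> Y -> S) (w : seq (X * Y)) : S :=
  match w with
  | [::] => \sum_(a : A) sigma a
  | p :: w' =>
    let n := (size w').+1 in
    let t : n.-tuple (X * Y) := in_tuple (p :: w') in
    \sum_(a : {ffun 'I_n -> A})
      (sigma (a ord0) *
       \prod_(i < n)
         (omega (a i) (tnth t i).1 (tnth t i).2 *
          (if (i.+1 < n)%N then
             deltaw delta (take i.+1 (map fst (p :: w'))) (a ord0) (a (inord i.+1))
           else 1)))
  end.

Definition moore_1n (B : finType) (sigma : B -> S) (delta : B -> X -> B -> S)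
  (omega : B -> Y -> S) (w : seq (X * Y)) : S :=
  match w with
  | [::] => \sum_(b : B) sigma b
  | p :: w' =>
    let n := (size w').+1 in
    let t : n.-tuple (X * Y) := in_tuple (p :: w') in
    \sum_(b : {ffun 'I_n.+1 -> B})
      (sigma (b ord0) *
       \prod_(i < n)
         (delta (b (inord i)) (tnth t i).1 (b (inord i.+1)) *
          omega (b (inord i.+1)) (tnth t i).2))
  end.

Definition moore_n1 (B : finType) (sigma : B -> S) (delta : B -> X -> B -> S)
  (omega : B -> Y -> S) (w : seq (X * Y)) : S :=
  match w with
  | [::] => \sum_(b : B) sigma b
  | p :: w' =>
    let n := (size w').+1 in
    let t : n.-tuple (X * Y) := in_tuple (p :: w') in
    \sum_(b : {ffun 'I_n.+1 -> B})
      (sigma (b ord0) *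
       \prod_(i < n)
         (deltaw delta (take i.+1 (map fst (p :: w'))) (b ord0) (b (inord i.+1)) *
          omega (b (inord i.+1)) (tnth t i).2))
  end.

End WA.

(* Main.v *)
Require Import Defs.
From HB Require Import structures.
From mathcomp Require Import all_boot all_order all_algebra.
Set Implicit Arguments. Unset Strict Implicit. Unset Printing Implicit Defensive.
Import GRing.Theory.
Local Open Scope ring_scope.

Section Gen.
Variable S : pzSemiRingType.

Lemma sum_delta_r (Q : finType) (F : Q -> S) q : \sum_r F r * (r == q)%:R = F q.
Proof.
rewrite (bigD1 q) //= eqxx mulr1 big1 ?addr0 // => r /negbTE ->; by rewrite mulr0.
Qed.

Lemma sum_delta_l (Q : finType) (F : Q -> S) q : \sum_r (q == r)%:R * F r = F q.
Proof.
rewrite (bigD1 q) //= eqxx mul1r big1 ?addr0 // => r; rewrite eq_sym => /negbTE ->; by rewrite mul0r.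
Qed.

Variable X : finType.

Lemma deltaw1 (Q : finType) (d : Q -> X -> Q -> S) x p q : deltaw d [:: x] p q = d p x q.
Proof. by rewrite /= sum_delta_r. Qed.

Lemma deltaw_rcons (Q : finType) (d : Q -> X -> Q -> S) w x p q :
  deltaw d (rcons w x) p q = \sum_r deltaw d w p r * d r x q.
Proof.
elim: w p => [|x0 w IH] p /=.
  by rewrite sum_delta_r sum_delta_l.
under eq_bigr => r _ do rewrite IH mulr_sumr.
rewrite exchange_big; apply: eq_bigr => s _; rewrite mulr_suml.
by apply: eq_bigr => r _; rewrite mulrA.
Qed.

Lemma prod_zero_seq (I : eqType) (r : seq I) (F : I -> S) i :
  i \in r -> F i = 0 -> \prod_(j <- r) F j = 0.
Proof.
elim: r => [//|j r IH]; rewrite inE big_cons => /orP [/eqP <- -> | Hi Hz].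
  by rewrite mul0r.
by rewrite IH // mulr0.
Qed.

Lemma prod_zero n (F : 'I_n -> S) i : F i = 0 -> \prod_(j < n) F j = 0.
Proof. by apply: prod_zero_seq; rewrite mem_index_enum. Qed.

Lemma regroup n (f g : nat -> S) :
  \prod_(i < n.+1) (f i * g i) = f 0%N * (\prod_(i < n) (g i * f i.+1)) * g n.
Proof.
elim: n => [|n IH]; first by rewrite big_ord1 big_ord0 mulr1.
by rewrite big_ord_recr /= IH big_ord_recr /= !mulrA.
Qed.

Lemma match_gen m (om e d : nat -> S) : e 0%N = 1 -> d m = 1 ->
  (forall i, (i < m)%N -> e i.+1 = d i) ->
  \prod_(i < m.+1) (e i * om i) = \prod_(i < m.+1) (om i * d i).
Proof.
move=> e0 dm H; rewrite regroup e0 mul1r big_ord_recr /= dm mulr1; congr (_ * _).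
by apply: eq_bigr => i _; rewrite H.
Qed.

Lemma reindex_main (A B : finType) n m (F : {ffun 'I_n -> B} -> S) (G : {ffun 'I_m -> A} -> S)
  (g : {ffun 'I_m -> A} -> {ffun 'I_n -> B}) (h : {ffun 'I_n -> B} -> {ffun 'I_m -> A}) :
  (forall a, h (g a) = a) -> (forall b, g (h b) != b -> F b = 0) ->
  (forall a, F (g a) = G a) -> \sum_b F b = \sum_a G a.
Proof.
move=> hg H0 H1.
rewrite (bigID (fun b => g (h b) == b)) /= [X in _ + X]big1 ?addr0; last first.
  by move=> b; apply: H0.
rewrite (reindex_onto g h) /=; last by move=> b /eqP.
apply: eq_big => [a|a _]; last exact: H1.
by rewrite hg !eqxx.
Qed.
End Gen.
Section Constr.
Variables (S : pzSemiRingType) (X Y A : finType)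
  (sigA : A -> S) (delA : A -> X -> A -> S) (omA : A -> X -> Y -> S).

Local Notation BB := (A * option X)%type.
Definition sigB (b : BB) : S := if b.2 is None then sigA b.1 else 0.
Definition delB (b : BB) (x : X) (b' : BB) : S :=
  if b'.2 == Some x then
    (match b.2 with None => (b.1 == b'.1)%:R | Some x0 => delA b.1 x0 b'.1 end)
  else 0.
Definition omB (b : BB) (y : Y) : S := if b.2 is Some x then omA b.1 x y else 0.

Lemma delB_out b x b' : b'.2 != Some x -> delB b x b' = 0.
Proof. by rewrite /delB => /negbTE ->. Qed.

Lemma deltawB_out w x b b' : b'.2 != Some x -> deltaw delB (rcons w x) b b' = 0.
Proof.
by move=> H; rewrite deltaw_rcons big1 // => r _; rewrite delB_out ?mulr0.
Qed.

Lemma deltawB_plain w x a a' s' :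
  deltaw delB (rcons w x) (a, None) (a', s') =
  if s' == Some x then deltaw delA w a a' else 0.
Proof.
elim/last_ind: w x a' s' => [|w x0 IH] x a' s'.
  by rewrite deltaw1 /delB /=; case: ifP.
rewrite deltaw_rcons.
rewrite (_ : \sum_r _ = \sum_c \sum_t deltaw delB (rcons w x0) (a, None) (c, t) * delB (c, t) x (a', s')); last by rewrite pair_bigA; apply: eq_bigr => -[].
under eq_bigr => c _ do under eq_bigr => t _ do rewrite IH.
have E c : \sum_t (if t == Some x0 then deltaw delA w a c else 0) * delB (c, t) x (a', s')
    = deltaw delA w a c * delB (c, Some x0) x (a', s').
  rewrite (bigD1 (Some x0)) //= eqxx big1 ?addr0 //.
  by move=> t /negbTE ->; rewrite mul0r.
under eq_bigr => c _ do rewrite E.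
rewrite /delB /=; case: ifP => _; last by rewrite big1 // => c _; rewrite mulr0.
by rewrite deltaw_rcons.
Qed.

Lemma sum_B : \sum_(b : BB) sigB b = \sum_a sigA a.
Proof.
rewrite (_ : \sum_b _ = \sum_c \sum_t sigB (c, t)); last by rewrite pair_bigA; apply: eq_bigr => -[].
apply: eq_bigr => c _; rewrite (bigD1 None) //= big1 ?addr0 //.
by case.
Qed.

End Constr.
Section Word.
Variables (S : pzSemiRingType) (X Y A : finType)
  (sigA : A -> S) (delA : A -> X -> A -> S) (omA : A -> X -> Y -> S).
Variables (p : (X * Y)%type) (w' : seq (X * Y)).
Local Notation m := (size w').
Local Notation BT := (A * option X)%type.

Definition xk k := (nth p (p :: w') k).1.

Definition gg (a : {ffun 'I_m.+1 -> A}) : {ffun 'I_m.+2 -> BT} :=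
  [ffun j : 'I_m.+2 => if nat_of_ord j is k.+1 then (a (inord k), Some (xk k)) else (a ord0, None)].
Definition hh (b : {ffun 'I_m.+2 -> BT}) : {ffun 'I_m.+1 -> A} :=
  [ffun i : 'I_m.+1 => (b (inord i.+1)).1].

Lemma hg a : hh (gg a) = a.
Proof. by apply/ffunP => i; rewrite !ffunE inordK /=; [f_equal; exact: inord_val | by rewrite ltnS]. Qed.

Lemma zero_gen (D : 'I_m.+1 -> {ffun 'I_m.+2 -> BT} -> S) :
 (forall (i : 'I_m.+1) (b : {ffun 'I_m.+2 -> BT}), (b (inord i.+1)).2 != Some (xk i) -> D i b = 0) ->
 (forall (b : {ffun 'I_m.+2 -> BT}) c, b ord0 = (c, None) -> c != (b (inord 1)).1 -> D ord0 b = 0) ->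
 forall b, gg (hh b) != b ->
   sigB sigA (b ord0) * \prod_(i < m.+1) (D i b * omB omA (b (inord i.+1)) (tnth (in_tuple (p :: w')) i).2) = 0.
Proof.
move=> H1 H2 b Hb.
have [j Hj] : exists j, b j != gg (hh b) j.
  apply/existsP; rewrite -negb_forall; apply: contra Hb => /forallP E.
  by apply/eqP/ffunP => j; apply/esym/eqP/E.
case: j Hj => [[|k] Hk] Hj.
  have E0 : Ordinal Hk = ord0 by apply: val_inj.
  rewrite ffunE /= E0 ffunE in Hj.
  case E: (b ord0) Hj => [c [x|]] Hj; first by rewrite /sigB /= mul0r.
  rewrite (prod_zero (i:=ord0)) ?mulr0 //.
  by rewrite (H2 _ c) ?mul0r //; apply: contra Hj => /eqP ->.
have Hk' : (k < m.+1)%N by [].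
have Ek : Ordinal Hk = inord k.+1 by apply: val_inj; rewrite /= inordK.
rewrite ffunE /= ffunE inordK // Ek in Hj.
rewrite (prod_zero (i := Ordinal Hk')) ?mulr0 // H1 ?mul0r //=.
by apply: contra Hj; case: (b _) => [c s] /= /eqP ->.
Qed.

Lemma I0 : (inord 0 : 'I_m.+1) = ord0.
Proof. by apply: val_inj; rewrite /= inordK. Qed.

Lemma gS a k : (k < m.+1)%N -> gg a (inord k.+1) = (a (inord k), Some (xk k)).
Proof. by move=> Hk; rewrite ffunE inordK. Qed.

Lemma g0 a : gg a (inord 0) = (a ord0, None).
Proof. by rewrite ffunE inordK. Qed.

Lemma g00 a : gg a ord0 = (a ord0, None).
Proof. by rewrite ffunE. Qed.

Lemma eq_1n : mealy_1n sigA delA omA (p :: w') = moore_1n (sigB sigA) (delB delA) (omB omA) (p :: w').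
Proof.
rewrite /mealy_1n /moore_1n /=; symmetry.
apply: (reindex_main (g := gg) (h := hh)); first exact: hg.
  move=> b; apply: (zero_gen (D := fun i b => delB delA (b (inord i)) (tnth (in_tuple (p :: w')) i).1 (b (inord i.+1)))).
    by move=> i b' H; rewrite delB_out // (tnth_nth p); exact: H.
  move=> b' c E H; rewrite (_ : inord 0 = ord0); last by apply: val_inj; rewrite /= inordK.
  rewrite E /delB /=; case: ifP => // _; by rewrite (negbTE H).
move=> a; rewrite ffunE /=; congr (_ * _).
pose om k := omA (a (inord k)) (xk k) (nth p (p :: w') k).2.
pose e k := if k is k'.+1 then delA (a (inord k')) (xk k') (a (inord k)) else 1.
pose d k := if (k.+1 < m.+1)%N then delA (a (inord k)) (xk k) (a (inord k.+1)) else 1.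
transitivity (\prod_(i < m.+1) (e i * om i)).
  apply: eq_bigr => -[[|k] Hk] _; rewrite (tnth_nth p) /=.
    by rewrite g0 gS // /e /om I0 /delB /= !eqxx.
  by rewrite !gS ?(ltnW Hk) // /e /om /delB /xk /= eqxx.
rewrite (@match_gen _ m om e d) //.
- by apply: eq_bigr => i _; rewrite /om /d (tnth_nth p) (@inord_val m i).
- by rewrite /d ltnn.
- by move=> i Hi; rewrite /d /e ltnS Hi.
Qed.

Lemma eq_n1 : mealy_n1 sigA delA omA (p :: w') = moore_n1 (sigB sigA) (delB delA) (omB omA) (p :: w').
Proof.
rewrite /mealy_n1 /moore_n1 /=; symmetry.
have Tk (k : nat) : (k < m.+1)%N -> take k.+1 (map fst (p :: w')) = rcons (take k (map fst (p :: w'))) (xk k).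
  by move=> Hk; rewrite (take_nth p.1) ?size_map // (nth_map p).
apply: (reindex_main (g := gg) (h := hh)); first exact: hg.
  move=> b; apply: (zero_gen (D := fun i b => deltaw (delB delA) (take i.+1 (map fst (p :: w'))) (b ord0) (b (inord i.+1)))).
    by move=> i b' H; rewrite Tk // deltawB_out.
  move=> b' c E H /=; rewrite take0 /= sum_delta_r E /delB /=; case: ifP => // _; by rewrite (negbTE H).
move=> a; rewrite g00; congr (_ * _).
pose om k := omA (a (inord k)) (xk k) (nth p (p :: w') k).2.
pose e k := deltaw delA (take k (map fst (p :: w'))) (a ord0) (a (inord k)).
pose d k := if (k.+1 < m.+1)%N then deltaw delA (take k.+1 (map fst (p :: w'))) (a ord0) (a (inord k.+1)) else 1.
transitivity (\prod_(i < m.+1) (e i * om i)).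
  apply: eq_bigr => -[k Hk] _; rewrite (tnth_nth p) gS //.
  have K : deltaw (delB delA) (take k.+1 (map fst (p :: w'))) (a ord0, None) (a (inord k), Some (xk k)) = e k.
    by rewrite Tk // deltawB_plain eqxx.
  by congr (_ * _); exact: K.
rewrite (@match_gen _ m om e d) //.
- by apply: eq_bigr => i _; rewrite /om /d (tnth_nth p) (@inord_val m i).
- by rewrite /e /= I0 eqxx.
- by rewrite /d ltnn.
- by move=> i Hi; rewrite /d /e ltnS Hi.
Qed.
End Word.

Theorem theorem4 (S : pzSemiRingType) (X Y A : finType)
  (sigA : A -> S) (delA : A -> X -> A -> S) (omA : A -> X -> Y -> S) :
  (0 < #|X|)%N -> (0 < #|Y|)%N -> (0 < #|A|)%N ->
  exists (B : finType) (sigB : B -> S) (delB : B -> X -> B -> S) (omB : B -> Y -> S),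
    [/\ (0 < #|B|)%N, (#|B| <= #|A| * #|X|.+1)%N,
        (forall w : seq (X * Y), mealy_1n sigA delA omA w = moore_1n sigB delB omB w) &
        (forall w : seq (X * Y), mealy_n1 sigA delA omA w = moore_n1 sigB delB omB w)].
Proof.
move=> _ _ HA.
exists (A * option X)%type, (sigB sigA), (delB delA), (omB (X := X) omA); split.
- by rewrite card_prod card_option muln_gt0 HA.
- by rewrite card_prod card_option.
- by case => [|p w']; [rewrite /= sum_B | exact: eq_1n].
- by case => [|p w']; [rewrite /= sum_B | exact: eq_n1].
Qed.
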